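(* Let $\gamma$ be a real number with $0<\gamma<1$. Then there exist an infinite binary sequence $\omega=\omega_0\omega_1\omega_2\ldots$ and an integer $N$ such that for every finite set $A\subset\mathbb{N}$ with $\#A\ge N$ there exists $t\in A$ with $$K(A,\omega(A)\mid t)\ \ge\ \gamma\cdot \#A .$$
   Context: $K(\cdot\mid\cdot)$ denotes conditional prefix Kolmogorov complexity; finite subsets of $\mathbb{N}$, natural numbers and binary strings are encoded as finite objects in a standard computable way, and $K(A,\omega(A)\mid t)$ is the complexity of the pair $(A,\omega(A))$ given $t$. For an infinite binary sequence $\omega$ and a finite set $A\subset\mathbb{N}$, $\omega(A)$ denotes the binary string of length $\#A$ formed by the bits $\omega_i$, $i\in A$, listed in increasing order of $i$. *)

(* Defs.v *)
From Stdlib Require Import Reals List Arith Sorting.Sorted.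
Import ListNotations.
Open Scope R_scope.

Inductive rf : Type :=
| RZero : rf
| RSucc : rf
| RProj : nat -> rf
| RComp : rf -> list rf -> rf
| RPrim : rf -> rf -> rf
| RMu   : rf -> rf.

Inductive eval : rf -> list nat -> nat -> Prop :=
| ev_zero : forall v, eval RZero v 0
| ev_succ : forall v, eval RSucc v (S (hd 0%nat v))
| ev_proj : forall i v, eval (RProj i) v (nth i v 0%nat)
| ev_comp : forall f gs v ws y,
    evals gs v ws -> eval f ws y -> eval (RComp f gs) v y
| ev_prim0 : forall f g v y, eval f v y -> eval (RPrim f g) (0%nat :: v) y
| ev_primS : forall f g n v z y,
    eval (RPrim f g) (n :: v) z -> eval g (n :: z :: v) y ->
    eval (RPrim f g) (S n :: v) y
| ev_mu : forall f v n,
    eval f (n :: v) 0%nat ->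
    (forall m, (m < n)%nat -> exists k, eval f (m :: v) (S k)) ->
    eval (RMu f) v n
with evals : list rf -> list nat -> list nat -> Prop :=
| evs_nil : forall v, evals [] v []
| evs_cons : forall g gs v y ys,
    eval g v y -> evals gs v ys -> evals (g :: gs) v (y :: ys).

(** Prefix-free binary description of a machine (program text). *)
Fixpoint unary (n : nat) : list bool :=
  match n with O => [false] | S k => true :: unary k end.

Fixpoint enc (f : rf) : list bool :=
  match f with
  | RZero => [false; false; false]
  | RSucc => [false; false; true]
  | RProj i => [false; true; false] ++ unary i
  | RComp g gs =>
      [false; true; true] ++ enc g ++
      (fix encl (l : list rf) : list bool :=
         match l with
         | [] => [false]
         | h :: t => true :: enc h ++ encl t
         end) gs
  | RPrim g h => [true; false; false] ++ enc g ++ enc h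
  | RMu g => [true; false; true] ++ enc g
  end.

Definition cpair (a b : nat) : nat := (((a + b) * (a + b + 1)) / 2 + b)%nat.

Fixpoint code_bits (s : list bool) : nat :=
  match s with
  | [] => 0%nat
  | b :: t => (2 * code_bits t + (if b then 2 else 1))%nat
  end.

Fixpoint code_list (l : list nat) : nat :=
  match l with
  | [] => 0%nat
  | x :: t => S (cpair x (code_list t))
  end.

(** A finite set A ⊂ ℕ is represented by its strictly increasing listing. *)
Definition code_finset (A : list nat) : nat := code_list A.

Definition restrict (omega : nat -> bool) (A : list nat) : list bool :=
  map omega A.

Definition is_prefix (p q : list bool) : Prop := exists r, q = p ++ r.

Definition prefix_free (M : rf) (y : nat) : Prop :=
  forall p q a b,
    eval M [code_bits p; y] a -> eval M [code_bits q; y] b ->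
    is_prefix p q -> p = q.

(** The universal prefix machine U(enc M ++ p | y) := M(p | y);
    a description of x given y is a pair (M, p) with M prefix-free
    and M(p | y) = x; its length is |enc M| + |p|. *)
Definition description (x y : nat) (M : rf) (p : list bool) : Prop :=
  prefix_free M y /\ eval M [code_bits p; y] x.

(** [K_ge x y r] : K(x | y) >= r, i.e. every description of x given y
    has length at least r (K = +infinity if there is none). *)
Definition K_ge (x y : nat) (r : R) : Prop :=
  forall M p, description x y M p ->
    r <= INR (length (enc M) + length p).

(* Main.v *)
Require Import Defs.
From Stdlib Require Import Reals List Arith Lia Lra Sorting.Sorted Classical FinFun ZArith.
From Stdlib Require ClassicalEpsilon.
Import ListNotations.
Local Open Scope nat_scope.

Fixpoint eval_det f v y (H : eval f v y) {struct H} : forall y', eval f v y' -> y = y'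
with evals_det gs v ys (H : evals gs v ys) {struct H} : forall ys', evals gs v ys' -> ys = ys'.
Proof.
  - destruct H; intros y' H'.
    + inversion H'; reflexivity.
    + inversion H'; reflexivity.
    + inversion H'; reflexivity.
    + inversion H'; subst.
      assert (ws = ws0) by (eapply evals_det; eassumption). subst.
      eapply eval_det; eassumption.
    + inversion H'; subst. eapply eval_det; eassumption.
    + inversion H'; subst.
      assert (z = z0) by (eapply eval_det; eassumption). subst.
      eapply eval_det; eassumption.
    + inversion H'; subst.
      destruct (lt_eq_lt_dec n y') as [[Hlt|Heq]|Hlt].
      * destruct (H3 n Hlt) as [k Hk].
        pose proof (eval_det _ _ _ H _ Hk). discriminate.
      * exact Heq.
      * destruct (H0 y' Hlt) as [k Hk].
        pose proof (eval_det _ _ _ Hk _ H2). discriminate.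
  - destruct H; intros ys' H'.
    + inversion H'; reflexivity.
    + inversion H'; subst.
      f_equal; [eapply eval_det; eassumption | eapply evals_det; eassumption].
Qed.

Fixpoint encl (l : list rf) : list bool :=
  match l with [] => [false] | h :: t => true :: enc h ++ encl t end.

Lemma enc_comp g gs : enc (RComp g gs) = [false; true; true] ++ enc g ++ encl gs.
Proof. reflexivity. Qed.

Lemma unary_pref i j r s : unary i ++ r = unary j ++ s -> i = j /\ r = s.
Proof.
  revert j; induction i; destruct j; simpl; intros H; inversion H; auto.
  destruct (IHi j H1); subst; auto.
Qed.

Fixpoint rf_ind' (P : rf -> Prop)
  (H0 : P RZero) (H1 : P RSucc) (H2 : forall i, P (RProj i))
  (H3 : forall g gs, P g -> Forall P gs -> P (RComp g gs))
  (H4 : forall g h, P g -> P h -> P (RPrim g h))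
  (H5 : forall g, P g -> P (RMu g)) (f : rf) {struct f} : P f :=
  match f with
  | RZero => H0 | RSucc => H1 | RProj i => H2 i
  | RComp g gs => H3 g gs (rf_ind' P H0 H1 H2 H3 H4 H5 g)
      ((fix go (l : list rf) : Forall P l :=
         match l with [] => Forall_nil _
         | h :: t => Forall_cons h (rf_ind' P H0 H1 H2 H3 H4 H5 h) (go t) end) gs)
  | RPrim g h => H4 g h (rf_ind' P H0 H1 H2 H3 H4 H5 g) (rf_ind' P H0 H1 H2 H3 H4 H5 h)
  | RMu g => H5 g (rf_ind' P H0 H1 H2 H3 H4 H5 g)
  end.

Definition PF f := forall g r s, enc f ++ r = enc g ++ s -> f = g /\ r = s.

Lemma encl_pref l : Forall PF l -> forall l' r s, encl l ++ r = encl l' ++ s -> l = l' /\ r = s.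
Proof.
  induction 1; intros l' r s E; destruct l'; simpl in E; inversion E; auto.
  rewrite <- !app_assoc in H2.
  destruct (H _ _ _ H2) as [-> E2].
  destruct (IHForall _ _ _ E2); subst; auto.
Qed.

Lemma enc_pref : forall f, PF f.
Proof.
  apply rf_ind'; unfold PF; intros;
  repeat match goal with
  | H : _ ++ _ = _ ++ _ |- _ => rewrite ?enc_comp in H
  end;
  match goal with
  | H : _ = enc ?g ++ _ |- _ => destruct g; rewrite ?enc_comp in H; simpl in H;
       inversion H; subst; clear H
  end; auto;
  repeat match goal with
  | H : _ ++ _ = _ ++ _ |- _ => rewrite <- ?app_assoc in H
  end.
  all: idtac.
  - match goal with E : unary _ ++ _ = unary _ ++ _ |- _ =>
      destruct (unary_pref _ _ _ _ E); subst end; auto.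
  - match goal with HH : forall _ _ _, enc ?g ++ _ = enc _ ++ _ -> _, E : enc ?g ++ _ = enc _ ++ _ |- _ =>
      destruct (HH _ _ _ E); subst end.
    match goal with E : encl _ ++ _ = encl _ ++ _ |- _ =>
      destruct (encl_pref _ H0 _ _ _ E); subst end; auto.
  - match goal with HH : forall _ _ _, enc ?g ++ _ = enc _ ++ _ -> _, E : enc ?g ++ _ = enc _ ++ _ |- _ =>
      destruct (HH _ _ _ E); subst end.
    match goal with HH : forall _ _ _, enc ?g ++ _ = enc _ ++ _ -> _, E : enc ?g ++ _ = enc _ ++ _ |- _ =>
      destruct (HH _ _ _ E); subst end; auto.
  - match goal with HH : forall _ _ _, enc ?g ++ _ = enc _ ++ _ -> _, E : enc ?g ++ _ = enc _ ++ _ |- _ =>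
      destruct (HH _ _ _ E); subst end; auto.
Qed.

Lemma code_bits_inj : forall s t, code_bits s = code_bits t -> s = t.
Proof.
  induction s as [|a s IH]; destruct t as [|b t]; simpl; intros H.
  - reflexivity.
  - destruct b; lia.
  - destruct a; lia.
  - destruct a, b; try lia; f_equal; apply IH; lia.
Qed.

Definition T2 s := (s * (s + 1)) / 2.

Lemma T2_S s : T2 (S s) = T2 s + S s.
Proof.
  unfold T2. replace (S s * (S s + 1)) with (s * (s+1) + S s * 2) by lia.
  rewrite Nat.div_add by lia. lia.
Qed.

Lemma T2_mono s s' : s < s' -> T2 s + s < T2 s'.
Proof.
  induction 1. rewrite T2_S; lia. rewrite T2_S; lia.
Qed.

Lemma cpair_inj a b c d : cpair a b = cpair c d -> a = c /\ b = d.
Proof.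
  unfold cpair. fold (T2 (a+b)). fold (T2 (c+d)). intros H.
  destruct (lt_eq_lt_dec (a+b) (c+d)) as [[Hl|He]|Hl].
  - pose proof (T2_mono _ _ Hl). lia.
  - rewrite He in H. lia.
  - pose proof (T2_mono _ _ Hl). lia.
Qed.

Lemma code_list_inj : forall l l', code_list l = code_list l' -> l = l'.
Proof.
  induction l; destruct l'; simpl; intros H; try discriminate; auto.
  injection H as H. apply cpair_inj in H as [-> H]. f_equal; auto.
Qed.

Lemma rel_inj_length {A B : Type} (eqB : forall x y : B, {x = y} + {x <> y})
  (Rl : A -> B -> Prop) (l : list A) :
  NoDup l -> forall l' : list B,
  (forall a, In a l -> exists b, In b l' /\ Rl a b) ->
  (forall a a' b, In a l -> In a' l -> Rl a b -> Rl a' b -> a = a') ->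
  length l <= length l'.
Proof.
  induction 1 as [|a l Ha Hnd IH]; intros l' Hex Hinj; simpl; [lia|].
  destruct (Hex a (or_introl eq_refl)) as [b [Hb Rb]].
  assert (length l <= length (remove eqB b l')).
  { apply IH.
    - intros a' Ha'. destruct (Hex a' (or_intror Ha')) as [b' [Hb' Rb']].
      exists b'. split; auto. apply in_in_remove; auto.
      intros ->. apply Ha. rewrite (Hinj a' a b) in Ha'; auto. right; auto. left; auto.
    - intros; apply (Hinj a0 a' b0); auto; right; auto. }
  pose proof (remove_length_lt eqB l' b Hb). lia.
Qed.

Lemma NoDup_flat_map' {A B : Type} (f : A -> list B) (l : list A) :
  NoDup l -> (forall a, In a l -> NoDup (f a)) ->
  (forall a a' y, In a l -> In a' l -> In y (f a) -> In y (f a') -> a = a') ->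
  NoDup (flat_map f l).
Proof.
  induction 1 as [|a l Ha Hnd IH]; intros Hf Hd; simpl; [constructor|].
  apply NoDup_app.
  - apply Hf; left; auto.
  - apply IH; [intros; apply Hf; right; auto | intros; eapply Hd; eauto; right; auto].
  - intros y Hy Hy'. apply in_flat_map in Hy' as [a' [Ha' Hy']].
    assert (a = a') by (eapply Hd; eauto; [left; auto | right; auto]). subst. auto.
Qed.

Fixpoint bits (n : nat) : list (list bool) :=
  match n with
  | 0 => [[]]
  | S k => map (cons false) (bits k) ++ map (cons true) (bits k)
  end.

Lemma bits_In n w : In w (bits n) <-> length w = n.
Proof.
  revert w; induction n; intros w; simpl.
  - split; [intros [<-|[]]; auto | destruct w; simpl; try discriminate; auto].
  - rewrite in_app_iff, !in_map_iff. split.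
    + intros [[w' [<- H]]|[w' [<- H]]]; simpl; f_equal; apply IHn; auto.
    + destruct w as [|b w]; simpl; try discriminate. intros H; injection H as H.
      destruct b; [right|left]; exists w; split; auto; apply IHn; auto.
Qed.

Lemma bits_NoDup n : NoDup (bits n).
Proof.
  induction n; simpl. constructor; auto; constructor.
  apply NoDup_app.
  - apply FinFun.Injective_map_NoDup; auto. intros x y H; injection H; auto.
  - apply FinFun.Injective_map_NoDup; auto. intros x y H; injection H; auto.
  - intros a Ha Hb. apply in_map_iff in Ha as [? [<- _]]. apply in_map_iff in Hb as [? [H _]]. discriminate.
Qed.

Lemma bits_length n : length (bits n) = 2 ^ n.
Proof. induction n; simpl; auto. rewrite length_app, !length_map. lia. Qed.

Definition strs_lt (l : nat) := flat_map bits (seq 0 l).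

Lemma strs_lt_In l w : length w < l -> In w (strs_lt l).
Proof.
  intros H. unfold strs_lt. apply in_flat_map. exists (length w). split.
  apply in_seq. lia. apply bits_In; auto.
Qed.

Lemma strs_lt_length l : length (strs_lt l) < 2 ^ l.
Proof.
  induction l. simpl. lia.
  unfold strs_lt in *. rewrite seq_S, flat_map_app. simpl. rewrite length_app, app_nil_r, bits_length. simpl. lia.
Qed.

Definition code (P : list nat * list bool) := cpair (code_finset (fst P)) (code_bits (snd P)).

Lemma code_inj P Q : code P = code Q -> P = Q.
Proof.
  destruct P, Q; unfold code, code_finset; simpl; intros H.
  apply cpair_inj in H as [H1 H2]. apply code_list_inj in H1. apply code_bits_inj in H2. subst; auto.
Qed.

Lemma count_bad (l : list (list nat * list bool)) t r L :
  NoDup l -> (forall P, In P l -> ~ K_ge (code P) t r) -> (r <= INR L)%R ->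
  length l < 2 ^ L.
Proof.
  intros Hnd Hbad Hr.
  eapply Nat.le_lt_trans; [|apply (strs_lt_length L)].
  apply (rel_inj_length (list_eq_dec Bool.bool_dec)
     (fun P w => exists M p, description (code P) t M p /\ w = enc M ++ p)); auto.
  - intros P HP. specialize (Hbad P HP). unfold K_ge in Hbad.
    apply not_all_ex_not in Hbad as [M Hb]. apply not_all_ex_not in Hb as [p Hb].
    apply imply_to_and in Hb as [Hd Hlt]. apply Rnot_le_lt in Hlt.
    exists (enc M ++ p). split; [|exists M, p; auto].
    apply strs_lt_In. rewrite length_app.
    assert (INR (length (enc M) + length p) < INR L)%R by lra.
    apply INR_lt in H. exact H.
  - intros P Q w _ _ [M [p [[_ H1] ->]]] [M' [p' [[_ H2] E]]].
    destruct (enc_pref M M' p p' E) as [-> ->].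
    apply code_inj. eapply eval_det; eauto.
Qed.

Definition dec (P : Prop) : bool :=
  if ClassicalEpsilon.excluded_middle_informative P then true else false.
Lemma dec_true P : dec P = true <-> P.
Proof. unfold dec; destruct ClassicalEpsilon.excluded_middle_informative; split; auto; discriminate. Qed.

Definition mat (w : list bool) (A : list nat) := map (fun j => nth j w false) A.

Definition upd (w : list bool) i b :=
  map (fun j => if j =? i then b else nth j w false) (seq 0 (length w)).

Lemma upd_length w i b : length (upd w i b) = length w.
Proof. unfold upd; rewrite length_map, length_seq; auto. Qed.

Lemma nth_map_seq (f : nat -> bool) L j : nth j (map f (seq 0 L)) false = if j <? L then f j else false.
Proof.
  destruct (Nat.ltb_spec j L).
  - rewrite nth_indep with (d' := f 0) by (rewrite length_map, length_seq; auto).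
    rewrite map_nth, seq_nth; auto.
  - apply nth_overflow. rewrite length_map, length_seq; auto.
Qed.

Lemma nth_upd_ne w i b j : j <> i -> nth j (upd w i b) false = nth j w false.
Proof.
  intros H. unfold upd. rewrite nth_map_seq. destruct (Nat.ltb_spec j (length w)).
  - apply Nat.eqb_neq in H. rewrite H; auto.
  - symmetry; apply nth_overflow; auto.
Qed.

Lemma nth_upd_eq w i b : i < length w -> nth i (upd w i b) false = b.
Proof.
  intros H. unfold upd. rewrite nth_map_seq. apply Nat.ltb_lt in H. rewrite H, Nat.eqb_refl; auto.
Qed.

Definition zeroA (A : list nat) (c : list bool) :=
  map (fun j => if existsb (Nat.eqb j) A then false else nth j c false) (seq 0 (length c)).

Lemma zeroA_length A c : length (zeroA A c) = length c.
Proof. unfold zeroA; rewrite length_map, length_seq; auto. Qed.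

Lemma existsb_eqb j A : existsb (Nat.eqb j) A = true <-> In j A.
Proof.
  rewrite existsb_exists. split.
  - intros [x [H1 H2]]. apply Nat.eqb_eq in H2; subst; auto.
  - intros H; exists j; split; auto. apply Nat.eqb_refl.
Qed.

Lemma nth_zeroA_in A c j : In j A -> nth j (zeroA A c) false = false.
Proof.
  intros H. unfold zeroA. rewrite nth_map_seq. apply existsb_eqb in H. rewrite H.
  destruct (_ <? _); auto.
Qed.

Lemma nth_zeroA_out A c j : ~ In j A -> nth j (zeroA A c) false = nth j c false.
Proof.
  intros H. unfold zeroA. rewrite nth_map_seq.
  destruct (existsb (Nat.eqb j) A) eqn:E. apply existsb_eqb in E; contradiction.
  destruct (Nat.ltb_spec j (length c)); auto. symmetry; apply nth_overflow; auto.
Qed.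

Fixpoint sublists (l : list nat) : list (list nat) :=
  match l with
  | [] => [[]]
  | a :: t => map (cons a) (sublists t) ++ sublists t
  end.

Lemma sublists_incl l A : In A (sublists l) -> incl A l.
Proof.
  revert A; induction l; simpl; intros A H.
  - destruct H as [<-|[]]. intros x [].
  - apply in_app_iff in H as [H|H].
    + apply in_map_iff in H as [A' [<- H]]. intros y [<-|Hy]; [left; auto|right; apply (IHl A'); auto].
    + intros y Hy; right; apply (IHl A); auto.
Qed.

Lemma sublists_NoDup l : NoDup l -> NoDup (sublists l).
Proof.
  induction 1; simpl. constructor; auto; constructor.
  apply NoDup_app.
  - apply Injective_map_NoDup; auto. intros u v E; injection E; auto.
  - auto.
  - intros A HA HA'. apply in_map_iff in HA as [A' [<- _]].
    apply sublists_incl in HA'. apply H, HA'. left; auto.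
Qed.

Lemma sorted_sublists k : forall m A, Sorted lt A -> (forall a, In a A -> m <= a < m + k) ->
  In A (sublists (seq m k)).
Proof.
  induction k; intros m A HS HA; simpl.
  - destruct A as [|a A]; [left; auto|]. specialize (HA a (or_introl eq_refl)). lia.
  - apply in_app_iff. destruct A as [|a A].
    + right. apply IHk; auto. intros a []. 
    + apply Sorted_StronglySorted in HS; [|intros x y z; lia].
      apply StronglySorted_inv in HS as [HS HF]. rewrite Forall_forall in HF.
      destruct (Nat.eq_dec a m).
      * subst. left. apply in_map. apply IHk. apply StronglySorted_Sorted; auto.
        intros b Hb. specialize (HF b Hb). specialize (HA b (or_intror Hb)). lia.
      * right. apply IHk. apply StronglySorted_Sorted; constructor; auto. apply Forall_forall; auto.
        intros b Hb. pose proof (HA a (or_introl eq_refl)).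
        destruct Hb as [<-|Hb]; [lia|]. specialize (HF b Hb). specialize (HA b (or_intror Hb)). lia.
Qed.

Definition rsum (l : list R) : R := fold_right Rplus 0%R l.

Lemma rsum_INR {A} (f : A -> nat) l : INR (list_sum (map f l)) = rsum (map (fun x => INR (f x)) l).
Proof. induction l; simpl; auto. rewrite plus_INR, IHl; auto. Qed.

Lemma rsum_le {A} (f g : A -> R) l : (forall x, In x l -> (f x <= g x)%R) ->
  (rsum (map f l) <= rsum (map g l))%R.
Proof.
  induction l; simpl; intros H. lra.
  pose proof (H a (or_introl eq_refl)). pose proof (IHl (fun x Hx => H x (or_intror Hx))). lra.
Qed.

Lemma rsum_scal {A} (c : R) (g : A -> R) l : rsum (map (fun x => c * g x)%R l) = (c * rsum (map g l))%R.
Proof. induction l; simpl. ring. rewrite IHl; ring. Qed.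

Lemma dec_iff P Q : (P <-> Q) -> dec P = dec Q.
Proof.
  intros H. destruct (dec P) eqn:E1; destruct (dec Q) eqn:E2; auto.
  - rewrite dec_true in E1. apply H in E1. rewrite <- dec_true in E1. congruence.
  - rewrite dec_true in E2. apply H in E2. rewrite <- dec_true in E2. congruence.
Qed.

Lemma mat_eq_nth c c' A j : mat c A = mat c' A -> In j A -> nth j c false = nth j c' false.
Proof.
  induction A; simpl; intros H Hj; [contradiction|]. injection H as H1 H2.
  destruct Hj as [<-|Hj]; auto.
Qed.

Lemma mat_ext c c' A : (forall j, In j A -> nth j c false = nth j c' false) -> mat c A = mat c' A.
Proof. intros H. unfold mat. apply map_ext_in. auto. Qed.

Lemma sorted_NoDup A : Sorted lt A -> NoDup A.
Proof.
  intros H. apply Sorted_StronglySorted in H; [|intros x y z; lia].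
  induction H; constructor; auto. intros Hin. rewrite Forall_forall in H0.
  specialize (H0 a Hin). lia.
Qed.

Lemma filter_neq_notin A i : ~ In i A -> length (filter (fun a => negb (a =? i)) A) = length A.
Proof.
  induction A; simpl; intros H; auto. destruct (Nat.eqb_spec a i). subst; tauto.
  simpl. rewrite IHA; auto.
Qed.

Lemma filter_neq_length A i : NoDup A -> In i A ->
  length (filter (fun a => negb (a =? i)) A) + 1 = length A.
Proof.
  induction 1; simpl; [intros []|intros [<-|Hi]].
  - rewrite Nat.eqb_refl. simpl.
    rewrite filter_neq_notin; auto. lia.
  - destruct (Nat.eqb_spec x i); subst; [contradiction|]. simpl. rewrite IHNoDup; auto.
Qed.

Section LLL.
Variable n : nat.
Variable forb : list nat -> list bool -> Prop.
Hypothesis forb_sorted : forall A x, forb A x -> Sorted lt A.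

Definition good (S : nat -> bool) (w : list bool) : Prop :=
  length w = n /\ (forall j, S j = false -> nth j w false = false) /\
  forall A, (forall a, In a A -> S a = true) -> ~ forb A (mat w A).

Definition GL S := filter (fun w => dec (good S w)) (bits n).
Definition Z S := length (GL S).

Lemma GL_In S w : In w (GL S) <-> good S w.
Proof.
  unfold GL. rewrite filter_In, dec_true, bits_In. split; [tauto|].
  intros H; split; auto; apply H.
Qed.

Lemma Z_ext S S' : (forall j, S j = S' j) -> Z S = Z S'.
Proof.
  intros H. unfold Z, GL. f_equal. apply filter_ext. intros w. apply dec_iff.
  unfold good. split; intros [H1 [H2 H3]]; repeat split; auto.
  - intros j Hj; apply H2; rewrite H; auto.
  - intros A HA; apply H3; intros; rewrite H; auto.
  - intros j Hj; apply H2; rewrite <- H; auto.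
  - intros A HA; apply H3; intros; rewrite <- H; auto.
Qed.

Definition rm (S : nat -> bool) (B : list nat) := fun j => andb (S j) (negb (existsb (Nat.eqb j) B)).

Lemma rm_true S B j : rm S B j = true <-> S j = true /\ ~ In j B.
Proof.
  unfold rm. rewrite Bool.andb_true_iff, Bool.negb_true_iff, <- existsb_eqb.
  split; intros [H1 H2]; split; auto. rewrite H2; discriminate.
  destruct (existsb _ _); auto. contradiction.
Qed.

Lemma rm_false S B j : rm S B j = false <-> S j = false \/ In j B.
Proof.
  destruct (rm S B j) eqn:E.
  - apply rm_true in E. split; [discriminate|]. intros [H|H]; destruct E; congruence || contradiction.
  - split; auto. intros _. destruct (S j) eqn:ES; auto. right.
    destruct (existsb (Nat.eqb j) B) eqn:EB. apply existsb_eqb; auto.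
    unfold rm in E. rewrite ES, EB in E. discriminate.
Qed.

Definition sub S := forall j, S j = true -> j < n.

Definition pats S i :=
  filter (fun P => dec (forb (fst P) (snd P) /\ In i (fst P) /\ forall a, In a (fst P) -> S a = true))
    (flat_map (fun A => map (pair A) (bits (length A))) (sublists (seq 0 n))).

Lemma pats_NoDup S i : NoDup (pats S i).
Proof.
  apply NoDup_filter. apply NoDup_flat_map'.
  - apply sublists_NoDup, seq_NoDup.
  - intros A _. apply Injective_map_NoDup; [|apply bits_NoDup]. intros x y E; injection E; auto.
  - intros A A' y _ _ H1 H2. apply in_map_iff in H1 as [? [<- _]]. apply in_map_iff in H2 as [? [E _]].
    injection E; auto.
Qed.

Lemma pats_In S i P : In P (pats S i) ->
  forb (fst P) (snd P) /\ In i (fst P) /\ forall a, In a (fst P) -> S a = true.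
Proof. unfold pats. rewrite filter_In, dec_true. tauto. Qed.

Definition Bset S i P :=
  filter (fun c => dec (mat c (fst P) = snd P /\ exists w b, good (rm S [i]) w /\ c = upd w i b)) (bits n).

Lemma step_count S i : sub S -> S i = true ->
  2 * Z (rm S [i]) <= Z S + list_sum (map (fun P => length (Bset S i P)) (pats S i)).
Proof.
  intros Hsub Hi.
  assert (Hin : i < n) by auto.
  set (G := GL (rm S [i])).
  assert (HG : forall w, In w G -> good (rm S [i]) w) by (intros; apply GL_In; auto).
  assert (Hwi : forall w, In w G -> nth i w false = false).
  { intros w Hw. apply HG in Hw. apply Hw. apply rm_false. right; left; auto. }
  assert (E2 : 2 * Z (rm S [i]) = length (map (fun w => (w, false)) G ++ map (fun w => (w, true)) G)).
  { rewrite length_app, !length_map. unfold Z. fold G. lia. }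
  rewrite E2.
  replace (list_sum (map (fun P => length (Bset S i P)) (pats S i)))
    with (length (concat (map (Bset S i) (pats S i)))) by (rewrite length_concat, map_map; auto).
  unfold Z at 1. rewrite <- length_app.
  apply (rel_inj_length (list_eq_dec Bool.bool_dec) (fun wb c => c = upd (fst wb) i (snd wb))).
  - apply NoDup_app.
    + apply Injective_map_NoDup. intros x y E; injection E; auto. apply NoDup_filter, bits_NoDup.
    + apply Injective_map_NoDup. intros x y E; injection E; auto. apply NoDup_filter, bits_NoDup.
    + intros a Ha Hb. apply in_map_iff in Ha as [? [<- _]]. apply in_map_iff in Hb as [? [E _]]. discriminate.
  - intros [w b] Hwb.
    assert (Hw : In w G) by (apply in_app_iff in Hwb as [H|H]; apply in_map_iff in H as [? [E H]]; injection E; intros; subst; auto).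
    pose proof (HG w Hw) as [Hl [Hz Hf]].
    exists (upd w i b). split; auto. simpl.
    set (c := upd w i b).
    assert (Hcl : length c = n) by (unfold c; rewrite upd_length; auto).
    assert (Hcz : forall j, S j = false -> nth j c false = false).
    { intros j Hj. unfold c. rewrite nth_upd_ne by congruence. apply Hz. apply rm_false; auto. }
    apply in_app_iff.
    destruct (classic (good S c)) as [Hgc|Hgc]; [left; apply GL_In; auto|right].
    assert (exists A, (forall a, In a A -> S a = true) /\ forb A (mat c A)) as [A [HA HfA]].
    { apply NNPP; intros Hne. apply Hgc. repeat split; auto. intros A HA HfA. apply Hne. eauto. }
    assert (HiA : In i A).
    { apply NNPP; intros HiA. apply (Hf A).
      - intros a Ha. apply rm_true. split; auto. intros [<-|[]]; contradiction.
      - replace (mat w A) with (mat c A); auto. apply mat_ext. intros j Hj. unfold c.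
        apply nth_upd_ne. intros ->; contradiction. }
    apply in_concat. exists (Bset S i (A, mat c A)). split.
    + apply in_map. unfold pats. apply filter_In. split.
      * apply in_flat_map. exists A. split.
        -- apply sorted_sublists. eapply forb_sorted; eauto.
           intros a Ha. specialize (Hsub a (HA a Ha)). lia.
        -- apply in_map. apply bits_In. unfold mat. rewrite length_map; auto.
      * apply dec_true. simpl. auto.
    + unfold Bset. apply filter_In. split. apply bits_In; auto.
      apply dec_true. simpl. split; auto. exists w, b. auto.
  - intros [w b] [w' b'] c H1 H2 E1 E3. simpl in E1, E3. subst c. clear E2. rename E3 into E2.
    assert (Hw : In w G) by (apply in_app_iff in H1 as [H|H]; apply in_map_iff in H as [? [E H]]; injection E; intros; subst; auto).
    assert (Hw' : In w' G) by (apply in_app_iff in H2 as [H|H]; apply in_map_iff in H as [? [E H]]; injection E; intros; subst; auto).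
    pose proof (HG w Hw) as [Hl _]. pose proof (HG w' Hw') as [Hl' _].
    assert (b = b').
    { rewrite <- (nth_upd_eq w i b), <- (nth_upd_eq w' i b') by lia. rewrite E2; auto. }
    subst b'. f_equal.
    apply nth_ext with (d := false) (d' := false). lia.
    intros j _. destruct (Nat.eq_dec j i).
    + subst. rewrite Hwi, Hwi; auto.
    + rewrite <- (nth_upd_ne w i b j), <- (nth_upd_ne w' i b j), E2; auto.
Qed.

Lemma B_bound S i P : sub S -> S i = true -> In P (pats S i) ->
  length (Bset S i P) <= Z (rm S (fst P)).
Proof.
  intros Hsub Hi HP. destruct P as [A x]. simpl.
  apply pats_In in HP as [HfA [HiA HAS]]. simpl in *.
  unfold Z. apply (rel_inj_length (list_eq_dec Bool.bool_dec) (fun c c' => c' = zeroA A c)).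
  - apply NoDup_filter, bits_NoDup.
  - intros c Hc. unfold Bset in Hc. apply filter_In in Hc as [Hcb Hc].
    apply dec_true in Hc as [Hm [w [b [[Hl [Hz Hf]] ->]]]]. simpl in Hm.
    exists (zeroA A (upd w i b)). split; auto. apply GL_In.
    repeat split.
    + rewrite zeroA_length, upd_length; auto.
    + intros j Hj. apply rm_false in Hj as [Hj|Hj].
      * destruct (classic (In j A)). apply nth_zeroA_in; auto.
        rewrite nth_zeroA_out by auto. rewrite nth_upd_ne by congruence.
        apply Hz. apply rm_false; auto.
      * apply nth_zeroA_in; auto.
    + intros Q HQ HfQ. apply (Hf Q).
      * intros q Hq. destruct (proj1 (rm_true _ _ _) (HQ q Hq)) as [HQ1 HQ2]. apply rm_true. split; auto.
        intros [<-|[]]; contradiction.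
      * replace (mat w Q) with (mat (zeroA A (upd w i b)) Q); auto.
        apply mat_ext. intros q Hq. destruct (proj1 (rm_true _ _ _) (HQ q Hq)) as [HQ1 HQ2].
        rewrite nth_zeroA_out by auto. apply nth_upd_ne. intros ->; contradiction.
  - intros c c' d Hc Hc' -> E.
    unfold Bset in Hc, Hc'. apply filter_In in Hc as [Hcb Hc]. apply filter_In in Hc' as [Hcb' Hc'].
    apply dec_true in Hc as [Hm _]. apply dec_true in Hc' as [Hm' _]. simpl in Hm, Hm'.
    apply bits_In in Hcb, Hcb'.
    apply nth_ext with (d := false) (d' := false). lia.
    intros j _. destruct (classic (In j A)).
    + eapply mat_eq_nth; eauto. congruence.
    + rewrite <- (nth_zeroA_out A c j), <- (nth_zeroA_out A c' j), E; auto.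
Qed.

Lemma filter_mono (f g : nat -> bool) l : (forall x, f x = true -> g x = true) ->
  length (filter f l) <= length (filter g l).
Proof.
  intros H. induction l; simpl; auto.
  destruct (f a) eqn:E1; [rewrite (H a E1); simpl; lia|]. destruct (g a); simpl; lia.
Qed.

Lemma filter_mono_lt (f g : nat -> bool) l x : (forall x, f x = true -> g x = true) ->
  In x l -> g x = true -> f x = false -> length (filter f l) < length (filter g l).
Proof.
  intros H. induction l; simpl; [tauto|]. intros [<-|Hx] Hg Hf.
  - rewrite Hf, Hg. simpl. pose proof (filter_mono f g l H). lia.
  - specialize (IHl Hx Hg Hf).
    destruct (f a) eqn:E1; [rewrite (H a E1); simpl; lia|]. destruct (g a); simpl; lia.
Qed.

Definition size S := length (filter S (seq 0 n)).

Variable alpha : R.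
Hypothesis alpha_pos : (0 < alpha)%R.
Hypothesis Hw : forall i (l : list (list nat * list bool)), NoDup l ->
  (forall P, In P l -> forb (fst P) (snd P) /\ In i (fst P)) ->
  (rsum (map (fun P => alpha / alpha ^ length (fst P)) l) <= 2 - alpha)%R.

Definition Claim k := forall S, sub S -> size S <= k -> forall i, S i = true ->
  (alpha * INR (Z (rm S [i])) <= INR (Z S))%R.

Lemma sub_rm S B : sub S -> sub (rm S B).
Proof. intros H j Hj. apply rm_true in Hj. apply H; tauto. Qed.

Lemma size_rm S B : size (rm S B) <= size S.
Proof. apply filter_mono. intros x Hx; apply rm_true in Hx; tauto. Qed.

Lemma chain k : Claim k -> forall B S, NoDup B -> sub S -> size S <= k ->
  (forall b, In b B -> S b = true) ->
  (alpha ^ length B * INR (Z (rm S B)) <= INR (Z S))%R.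
Proof.
  intros HC B. induction B as [|b B IH]; intros S HB Hs Hk HBS.
  - simpl. rewrite (Z_ext _ S). lra. intros j. unfold rm; simpl. rewrite Bool.andb_true_r; auto.
  - inversion HB; subst. simpl.
    set (S' := rm S [b]).
    assert (IH' : (alpha ^ length B * INR (Z (rm S' B)) <= INR (Z S'))%R).
    { apply IH; auto. apply sub_rm; auto. pose proof (size_rm S [b]); unfold S'; lia.
      intros c Hc. apply rm_true. split. apply HBS; right; auto. intros [<-|[]]; contradiction. }
    assert (HS' : (alpha * INR (Z S') <= INR (Z S))%R) by (apply HC; [exact Hs|exact Hk|apply HBS; left; auto]).
    rewrite (Z_ext (rm S (b :: B)) (rm S' B)).
    + pose proof (pow_lt alpha (length B) alpha_pos).
      assert (alpha * (alpha ^ length B * INR (Z (rm S' B))) <= alpha * INR (Z S'))%R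
        by (apply Rmult_le_compat_l; lra). lra.
    + intros j. unfold S', rm. simpl. destruct (S j), (j =? b); simpl; auto.
Qed.

Lemma claim_step k : Claim k -> Claim (S k).
Proof.
  intros HC S Hs Hk i Hi.
  set (S' := rm S [i]).
  assert (HiS : i < n) by (apply Hs; auto).
  assert (Hk' : size S' <= k).
  { assert (size S' < size S); [|lia]. unfold size, S'.
    apply (filter_mono_lt _ _ _ i). intros x Hx; apply rm_true in Hx; tauto.
    apply in_seq; lia. auto. apply rm_false. right; left; auto. }
  assert (Hs' : sub S') by (apply sub_rm; auto).
  pose proof (step_count S i Hs Hi) as Hcount. fold S' in Hcount.
  apply le_INR in Hcount. rewrite mult_INR, plus_INR, rsum_INR in Hcount. simpl (INR 2) in Hcount.
  assert (Hb : forall P, In P (pats S i) ->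
     (INR (length (Bset S i P)) <= INR (Z S') * (alpha / alpha ^ length (fst P)))%R).
  { intros P HP. pose proof (B_bound S i P Hs Hi HP) as HB. apply le_INR in HB.
    destruct (pats_In S i P HP) as [HfA [HiA HAS]].
    set (A := fst P) in *.
    set (Bf := filter (fun a => negb (a =? i)) A).
    assert (HnA : NoDup A) by (eapply sorted_NoDup, forb_sorted; eauto).
    assert (HBl : length Bf + 1 = length A) by (apply filter_neq_length; auto).
    assert (Hch : (alpha ^ length Bf * INR (Z (rm S' Bf)) <= INR (Z S'))%R).
    { apply (chain k HC); auto. apply NoDup_filter; auto.
      intros b Hb. unfold Bf in Hb. apply filter_In in Hb as [Hb1 Hb2].
      apply rm_true. split; auto. intros [<-|[]]. rewrite Nat.eqb_refl in Hb2. discriminate. }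
    rewrite (Z_ext (rm S' Bf) (rm S A)) in Hch.
    2:{ intros j. unfold S', rm, Bf. simpl. rewrite Bool.orb_false_r.
        destruct (S j) eqn:ESj; simpl; auto.
        destruct (Nat.eqb_spec j i).
        - subst. simpl. symmetry. apply Bool.negb_false_iff. apply existsb_eqb; auto.
        - simpl. f_equal.
          destruct (existsb (Nat.eqb j) A) eqn:E1; destruct (existsb (Nat.eqb j) (filter _ A)) eqn:E2; auto.
          + apply Bool.not_true_iff_false in E2. exfalso. apply E2. apply existsb_eqb.
            apply filter_In. split. apply existsb_eqb; auto. apply Bool.negb_true_iff, Nat.eqb_neq; auto.
          + apply existsb_eqb in E2. apply filter_In in E2. apply Bool.not_true_iff_false in E1.
            exfalso; apply E1, existsb_eqb; tauto. }
    rewrite <- HBl. rewrite Nat.add_1_r. simpl.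
    pose proof (pow_lt alpha (length Bf) alpha_pos).
    replace (INR (Z S') * (alpha / (alpha * alpha ^ length Bf)))%R with (INR (Z S') / alpha ^ length Bf)%R
      by (field; split; lra).
    apply Rle_trans with (INR (Z (rm S A))); auto.
    apply (Rmult_le_reg_l (alpha ^ length Bf)); auto.
    replace (alpha ^ length Bf * (INR (Z S') / alpha ^ length Bf))%R with (INR (Z S')) by (field; lra).
    lra. }
  assert (Hsum : (rsum (map (fun P => INR (length (Bset S i P))) (pats S i)) <= INR (Z S') * (2 - alpha))%R).
  { eapply Rle_trans. apply (rsum_le _ (fun P => INR (Z S') * (alpha / alpha ^ length (fst P)))%R). exact Hb.
    rewrite rsum_scal. apply Rmult_le_compat_l. apply pos_INR.
    apply (Hw i). apply pats_NoDup. intros P HP. apply pats_In in HP. tauto. }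
  fold S'. lra.
Qed.

Lemma claim_all k : Claim k.
Proof.
  induction k. intros S Hs Hk i Hi. exfalso.
  assert (size S > 0); [|lia]. unfold size.
  pose proof (filter_mono_lt (fun _ => false) S (seq 0 n) i). simpl in H.
  assert (E0 : forall l, filter (fun _ : nat => false) l = []) by (induction l; auto).
  rewrite E0 in H. simpl in H.
  apply H; auto. intros; discriminate. apply in_seq. split; [lia|]. apply Hs; auto.
  apply claim_step; auto.
Qed.

Hypothesis forb_nil : forall x, ~ forb [] x.

Lemma exists_good : exists w, length w = n /\ forall A, (forall a, In a A -> a < n) -> ~ forb A (mat w A).
Proof.
  set (F := fun j => j <? n).
  assert (HF : sub F) by (intros j Hj; apply Nat.ltb_lt; auto).
  assert (Hsz : size F <= n) by (unfold size; rewrite <- (length_seq n 0) at 2; apply filter_length_le).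
  pose proof (chain n (claim_all n) (seq 0 n) F (seq_NoDup _ _) HF Hsz) as H.
  assert (Z (rm F (seq 0 n)) >= 1).
  { unfold Z. assert (In (repeat false n) (GL (rm F (seq 0 n)))).
    { apply GL_In. repeat split. apply repeat_length.
      intros j _. apply nth_repeat.
      intros A HA Hf. destruct A as [|a A]. eapply forb_nil; eauto.
      specialize (HA a (or_introl eq_refl)). apply rm_true in HA as [H1 H2].
      apply H2, in_seq. unfold F in H1. apply Nat.ltb_lt in H1. lia. }
    destruct (GL _); simpl in *; [contradiction|lia]. }
  assert (INR (Z F) > 0)%R.
  { assert (H1 : (alpha ^ length (seq 0 n) * INR (Z (rm F (seq 0 n)))> 0)%R).
    { apply Rmult_lt_0_compat. apply pow_lt; auto. apply lt_0_INR. lia. }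
    assert (H2 : forall b, In b (seq 0 n) -> F b = true).
    { intros b Hb. apply in_seq in Hb. apply Nat.ltb_lt. lia. }
    specialize (H H2). lra. }
  unfold Z in H1. destruct (GL F) as [|w l] eqn:EG. simpl in H1. lra.
  assert (Hw' : good F w) by (apply GL_In; rewrite EG; left; auto).
  destruct Hw' as [Hl [_ Hf]]. exists w. split; auto.
  intros A HA. apply Hf. intros a Ha. apply Nat.ltb_lt; auto.
Qed.

End LLL.

Lemma rsum_app l1 l2 : rsum (l1 ++ l2) = (rsum l1 + rsum l2)%R.
Proof. induction l1; simpl. ring. rewrite IHl1; ring. Qed.

Lemma geo_sum r N K : (0 <= r < 1)%R ->
  (rsum (map (fun m => if N <=? m then r ^ m else 0) (seq 0 K)) <= r ^ N / (1 - r))%R.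
Proof.
  intros Hr.
  assert (Hid : forall K, ((1 - r) * rsum (map (fun m => if N <=? m then r ^ m else 0) (seq 0 K))
                           + r ^ (Nat.max K N) = r ^ N)%R).
  { induction K0.
    - simpl. ring.
    - rewrite seq_S, map_app, rsum_app. simpl map. simpl rsum.
      destruct (Nat.leb_spec N K0).
      + rewrite Nat.max_l in IHK0 by lia. rewrite (Nat.max_l (S K0)) by lia. simpl pow.
        set (s := rsum _) in *. rewrite <- IHK0. ring.
      + rewrite Nat.max_r in IHK0 by lia. rewrite (Nat.max_r (S K0)) by lia.
        set (s := rsum _) in *. transitivity ((1 - r) * s + r ^ N)%R; [ring|exact IHK0]. }
  specialize (Hid K). pose proof (pow_le r (Nat.max K N) (proj1 Hr)).
  apply (Rmult_le_reg_l (1 - r)). lra.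
  replace ((1 - r) * (r ^ N / (1 - r)))%R with (r ^ N)%R by (field; lra). lra.
Qed.

Lemma rsum_indic {A} (g : A -> nat) (a : A) (h : nat -> R) K : g a < K ->
  rsum (map (fun m => h m * (if g a =? m then 1 else 0))%R (seq 0 K)) = h (g a).
Proof.
  induction K; intros H; [lia|]. rewrite seq_S, map_app, rsum_app. simpl.
  destruct (Nat.eqb_spec (g a) K).
  - subst. assert (rsum (map (fun m => h m * (if g a =? m then 1 else 0))%R (seq 0 (g a))) = 0%R).
    { clear IHK H. assert (Hl : forall m, In m (seq 0 (g a)) -> m < g a)
        by (intros m Hm; apply in_seq in Hm; lia).
      induction (seq 0 (g a)); simpl; auto.
      assert (a0 < g a) by (apply Hl; left; auto).
      destruct (Nat.eqb_spec (g a) a0); [lia|]. rewrite IHl; [ring|].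
      intros; apply Hl; right; auto. }
    rewrite H0. ring.
  - rewrite IHK by lia. ring.
Qed.

Lemma group_sum {A} (g : A -> nat) (h : nat -> R) (l : list A) K :
  (forall P, In P l -> g P < K) ->
  rsum (map (fun P => h (g P)) l) =
  rsum (map (fun m => h m * INR (length (filter (fun P => g P =? m) l)))%R (seq 0 K)).
Proof.
  induction l; intros HK; simpl.
  - induction (seq 0 K); simpl; auto. rewrite <- IHl. rewrite Rmult_0_r, Rplus_0_r. reflexivity.
  - rewrite IHl by (intros; apply HK; right; auto).
    transitivity (rsum (map (fun m => h m * (if g a =? m then 1 else 0))%R (seq 0 K)) +
                  rsum (map (fun m => h m * INR (length (filter (fun P => g P =? m) l)))%R (seq 0 K)))%R.
    + rewrite rsum_indic; [ring|apply HK; left; auto].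
    + clear IHl HK. induction (seq 0 K); simpl. ring.
      rewrite <- IHl0. destruct (g a =? a0); simpl length; rewrite ?S_INR; ring.
Qed.

Lemma Rpower_pos x y : (0 < Rpower x y)%R.
Proof. unfold Rpower; apply exp_pos. Qed.

Definition ell (g : R) (m : nat) := Z.to_nat (up (g * INR m)).

Lemma ell_bounds g m : (0 <= g)%R -> (g * INR m < INR (ell g m) <= g * INR m + 1)%R.
Proof.
  intros Hg. unfold ell. pose proof (archimed (g * INR m)) as [H1 H2].
  assert (0 <= g * INR m)%R by (apply Rmult_le_pos; auto; apply pos_INR).
  assert (0 <= up (g * INR m))%Z by (apply le_IZR; lra).
  rewrite (INR_IZR_INZ (Z.to_nat _)), Z2Nat.id by auto. lra.
Qed.

Lemma pow2_ell g m : (0 <= g)%R -> (2 ^ ell g m <= 2 * Rpower 2 (g * INR m))%R.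
Proof.
  intros Hg. rewrite <- Rpower_pow by lra.
  destruct (ell_bounds g m Hg).
  apply Rle_trans with (Rpower 2 (g * INR m + 1)).
  apply Rle_Rpower; lra.
  rewrite Rpower_plus, Rpower_1 by lra. lra.
Qed.

Section Numbers.
Variable gamma : R.
Hypothesis Hg : (0 < gamma < 1)%R.
Definition alpha := Rpower 2 ((1 + gamma) / 2).
Definition rr := Rpower 2 ((gamma - 1) / 2).

Lemma alpha_bounds : (1 < alpha < 2)%R.
Proof.
  unfold alpha. split.
  - apply Rle_lt_trans with (Rpower 2 0); [rewrite Rpower_O; lra|apply Rpower_lt; lra].
  - apply Rlt_le_trans with (Rpower 2 1); [apply Rpower_lt; lra|rewrite Rpower_1; lra].
Qed.

Lemma rr_bounds : (0 < rr < 1)%R.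
Proof.
  unfold rr. split. apply Rpower_pos.
  apply Rlt_le_trans with (Rpower 2 0); [apply Rpower_lt; lra|rewrite Rpower_O; lra].
Qed.

Lemma alpha_rr_pow m : ((alpha * rr) ^ m = Rpower 2 (gamma * INR m))%R.
Proof.
  unfold alpha, rr. rewrite <- Rpower_plus.
  replace ((1 + gamma) / 2 + (gamma - 1) / 2)%R with gamma by field.
  rewrite <- Rpower_pow by apply Rpower_pos. rewrite Rpower_mult. f_equal.
Qed.

Lemma choose_N : exists N, 1 <= N /\ (2 * alpha * (rr ^ N / (1 - rr)) <= 2 - alpha)%R.
Proof.
  destruct alpha_bounds, rr_bounds.
  assert (Hy : (0 < (2 - alpha) * (1 - rr) / (2 * alpha))%R).
  { apply Rdiv_lt_0_compat; [apply Rmult_lt_0_compat|]; lra. }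
  destruct (pow_lt_1_zero rr ltac:(rewrite Rabs_right; lra) _ Hy) as [N0 HN0].
  exists (Nat.max N0 1). split. lia.
  specialize (HN0 (Nat.max N0 1) ltac:(lia)).
  rewrite Rabs_right in HN0 by (apply Rle_ge, pow_le; lra).
  set (q := (rr ^ Nat.max N0 1)%R) in *.
  apply (Rmult_lt_compat_l (2 * alpha)) in HN0; [|lra].
  replace (2 * alpha * ((2 - alpha) * (1 - rr) / (2 * alpha)))%R with ((2 - alpha) * (1 - rr))%R in HN0
    by (field; lra).
  replace (2 * alpha * (q / (1 - rr)))%R with (2 * alpha * q / (1 - rr))%R by (field; lra).
  apply Rlt_le. apply (Rmult_lt_reg_r (1 - rr)); [lra|].
  replace (2 * alpha * q / (1 - rr) * (1 - rr))%R with (2 * alpha * q)%R by (field; lra). lra.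
Qed.
End Numbers.

Definition forbP (gamma : R) (N : nat) (A : list nat) (x : list bool) : Prop :=
  Sorted lt A /\ N <= length A /\
  forall t, In t A -> ~ K_ge (cpair (code_finset A) (code_bits x)) t (gamma * INR (length A)).

Lemma Hw_holds gamma N : (0 < gamma < 1)%R ->
  (2 * alpha gamma * (rr gamma ^ N / (1 - rr gamma)) <= 2 - alpha gamma)%R ->
  forall i (l : list (list nat * list bool)), NoDup l ->
  (forall P, In P l -> forbP gamma N (fst P) (snd P) /\ In i (fst P)) ->
  (rsum (map (fun P => alpha gamma / alpha gamma ^ length (fst P)) l) <= 2 - alpha gamma)%R.
Proof.
  intros Hg HN i l Hnd Hl.
  set (a := alpha gamma) in *. set (r := rr gamma) in *.
  assert (Ha : (1 < a < 2)%R) by (apply alpha_bounds; auto).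
  assert (Hr : (0 < r < 1)%R) by (apply rr_bounds; auto).
  set (K := S (list_max (map (fun P => length (fst P)) l))).
  rewrite (group_sum (fun P => length (fst P)) (fun m => a / a ^ m)%R l K).
  2:{ intros P HP. unfold K. apply Nat.lt_succ_r.
      pose proof (proj1 (list_max_le (map (fun P => length (fst P)) l) _) (le_n _)) as HF. rewrite Forall_forall in HF.
      apply HF. apply (in_map (fun P => length (fst P))); auto. }
  eapply Rle_trans; [|exact HN].
  eapply Rle_trans.
  - apply (rsum_le _ (fun m => 2 * a * (if N <=? m then r ^ m else 0))%R).
    intros m _.
    set (lm := filter (fun P => length (fst P) =? m) l).
    assert (Hlm : forall P, In P lm -> forbP gamma N (fst P) (snd P) /\ In i (fst P) /\ length (fst P) = m).
    { intros P HP. unfold lm in HP. apply filter_In in HP as [HP HP2]. apply Nat.eqb_eq in HP2.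
      destruct (Hl P HP); auto. }
    pose proof (pow_lt a m ltac:(lra)) as Ham.
    destruct (Nat.leb_spec N m).
    + assert (Hc : length lm < 2 ^ ell gamma m).
      { apply (count_bad lm i (gamma * INR m)).
        - apply NoDup_filter; auto.
        - intros P HP. destruct (Hlm P HP) as [[_ [_ Hk]] [Hi Hm]].
          unfold code. rewrite <- Hm. apply Hk; auto.
        - apply Rlt_le, ell_bounds. lra. }
      apply lt_INR in Hc. rewrite pow_INR in Hc. replace (INR 2) with 2%R in Hc by (simpl; lra).
      pose proof (pow2_ell gamma m ltac:(lra)). rewrite <- alpha_rr_pow in H0; auto.
      fold a r in H0. rewrite Rpow_mult_distr in H0.
      apply Rle_trans with (a / a ^ m * (2 * (a ^ m * r ^ m)))%R.
      * apply Rmult_le_compat_l. apply Rlt_le, Rdiv_lt_0_compat; lra. lra.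
      * right. field. lra.
    + assert (lm = []) as ->.
      { destruct lm as [|P lm'] eqn:E; auto. destruct (Hlm P (or_introl eq_refl)) as [[_ [HN' _]] [_ Hm]]. lia. }
      simpl. lra.
  - rewrite rsum_scal. apply Rmult_le_compat_l. lra. apply geo_sum. lra.
Qed.

Definition goodF (F : list nat -> list bool -> Prop) n w :=
  length w = n /\ forall A, (forall a, In a A -> a < n) -> ~ F A (mat w A).

Lemma goodF_firstn F m w j : goodF F m w -> j <= m -> goodF F j (firstn j w).
Proof.
  intros [Hl Hf] Hj. split. rewrite length_firstn; lia.
  intros A HA. replace (mat (firstn j w) A) with (mat w A). apply Hf. intros a Ha; specialize (HA a Ha); lia.
  apply mat_ext. intros a Ha. rewrite nth_firstn. specialize (HA a Ha). apply Nat.ltb_lt in HA. rewrite HA; auto.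
Qed.

Lemma firstn_S_nth (w : list bool) j : j < length w -> firstn (S j) w = firstn j w ++ [nth j w false].
Proof.
  revert w; induction j; intros w Hw; destruct w as [|b w]; simpl in *; try lia; auto.
  rewrite IHj by lia. auto.
Qed.

Definition TT F (u : list bool) := forall k, exists w, goodF F (length u + k) w /\ firstn (length u) w = u.

Lemma TT_ext F u : TT F u -> TT F (u ++ [false]) \/ TT F (u ++ [true]).
Proof.
  intros HT. apply NNPP. intros Hn. apply not_or_and in Hn as [H0 H1].
  apply not_all_ex_not in H0 as [k0 H0]. apply not_all_ex_not in H1 as [k1 H1].
  destruct (HT (S (Nat.max k0 k1))) as [w [Hg Hpre]].
  set (b := nth (length u) w false).
  assert (Hlw : length w = length u + S (Nat.max k0 k1)) by apply Hg.
  assert (Hfb : firstn (S (length u)) w = u ++ [b]).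
  { rewrite firstn_S_nth by lia. rewrite Hpre; auto. }
  rewrite length_app in H0, H1. simpl in H0, H1.
  destruct b eqn:Eb.
  - apply H1. exists (firstn (length u + 1 + k1) w). split.
    + apply goodF_firstn with (m := length u + S (Nat.max k0 k1)); auto. lia.
    + rewrite firstn_firstn. rewrite Nat.min_l by lia. rewrite Nat.add_1_r. rewrite Hfb. auto.
  - apply H0. exists (firstn (length u + 1 + k0) w). split.
    + apply goodF_firstn with (m := length u + S (Nat.max k0 k1)); auto. lia.
    + rewrite firstn_firstn. rewrite Nat.min_l by lia. rewrite Nat.add_1_r. rewrite Hfb. auto.
Qed.

Definition nextb F u : bool :=
  if ClassicalEpsilon.excluded_middle_informative (TT F (u ++ [false])) then false else true.

Fixpoint pref F k : list bool :=
  match k with 0 => [] | S k' => pref F k' ++ [nextb F (pref F k')] end.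

Lemma pref_length F k : length (pref F k) = k.
Proof. induction k; simpl; auto. rewrite length_app, IHk; simpl; lia. Qed.

Lemma pref_TT F : (forall n, exists w, goodF F n w) -> forall k, TT F (pref F k).
Proof.
  intros Hex. induction k; simpl.
  - intros k. destruct (Hex k) as [w Hw]. exists w. split; auto.
  - unfold nextb. destruct ClassicalEpsilon.excluded_middle_informative; auto.
    destruct (TT_ext F _ IHk); auto. contradiction.
Qed.

Lemma pref_nth F k j : j < k -> nth j (pref F k) false = nth j (pref F (S j)) false.
Proof.
  induction k; intros H; [lia|]. destruct (Nat.eq_dec j k); [subst; auto|].
  simpl. rewrite app_nth1 by (rewrite pref_length; lia). apply IHk; lia.
Qed.

Lemma pref_good F : (forall n, exists w, goodF F n w) -> forall m, goodF F m (pref F m).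
Proof.
  intros Hex m. destruct (pref_TT F Hex m 0) as [w [Hg Hp]].
  rewrite pref_length, Nat.add_0_r in *.
  assert (length w = m) by apply Hg.
  rewrite firstn_all2 in Hp by lia. subst; auto.
Qed.

Local Open Scope R_scope.

Theorem theorem1 :
  forall gamma : R, 0 < gamma < 1 ->
  exists (omega : nat -> bool) (N : nat),
    forall A : list nat,
      Sorted Nat.lt A ->
      (N <= length A)%nat ->
      exists t : nat, In t A /\
        K_ge (cpair (code_finset A) (code_bits (restrict omega A))) t
             (gamma * INR (length A)).
Proof.
  intros gamma Hg.
  destruct (choose_N gamma Hg) as [N [HN1 HN]].
  set (F := forbP gamma N).
  assert (Hex : forall n, exists w, goodF F n w).
  { intros n.
    destruct (exists_good n F (fun A x H => proj1 H) (alpha gamma)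
                ltac:(pose proof (alpha_bounds gamma Hg); lra)
                (Hw_holds gamma N Hg HN)
                (fun x H => ltac:(destruct H as [_ [H _]]; simpl in H; lia))) as [w Hw].
    exists w. exact Hw. }
  exists (fun j => nth j (pref F (S j)) false), N.
  intros A HS HN'.
  set (m := S (list_max A)).
  destruct (pref_good F Hex m) as [_ Hgm].
  assert (HA : forall a, In a A -> (a < m)%nat).
  { intros a Ha. unfold m. apply Nat.lt_succ_r.
    pose proof (proj1 (list_max_le A _) (le_n _)) as HF. rewrite Forall_forall in HF. auto. }
  specialize (Hgm A HA).
  replace (mat (pref F m) A) with (restrict (fun j => nth j (pref F (S j)) false) A) in Hgm.
  2:{ unfold restrict, mat. apply map_ext_in. intros a Ha. symmetry. apply pref_nth. auto. }
  unfold F, forbP in Hgm.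
  apply NNPP. intros Hno. apply Hgm. split; auto. split; auto.
  intros t Ht HK. apply Hno. exists t. auto.
Qed.
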